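(* Let $\mathcal{X}=G^{\min}/P$ be the affine Grassmannian of the minimal affine Kac–Moody group $\widehat{SL_2}$, and let $c^k_{n,m}\in\mathbb{Z}[\alpha_0,\alpha_1]$ be the $T$-equivariant Schubert structure constants, $\hat{\varepsilon}_n\cdot\hat{\varepsilon}_m=\sum_{k=\max\{n,m\}}^{n+m}c^k_{n,m}\hat{\varepsilon}_k$. Then for integers $n\le m$, $$c^{m}_{n,m}= \begin{cases} \binom{\frac{m+n}{2}}{n}\prod_{i=0}^{n-1}\Big(\big(\tfrac{m-n}{2}+i\big)\alpha_0+\big(\tfrac{m-n}{2}+1+i\big)\alpha_1\Big) & n,m\text{ even},\\[1ex] \binom{\frac{m+n}{2}}{n}\prod_{i=0}^{n-1}\Big(\big(\tfrac{m-n}{2}+1+i\big)\alpha_0+\big(\tfrac{m-n}{2}+i\big)\alpha_1\Big) & n,m\text{ odd},\\[1ex] \binom{\frac{m+n-1}{2}}{n}\prod_{i=0}^{n-1}\Big(\big(\tfrac{m-n+1}{2}+i\big)\alpha_0+\big(\tfrac{m-n+1}{2}+1+i\big)\alpha_1\Big) & n\text{ odd}, m\text{ even},\\[1ex] \binom{\frac{m+n-1}{2}}{n}\prod_{i=0}^{n-1}\Big(\big(\tfrac{m-n+1}{2}+1+i\big)\alpha_0+\big(\tfrac{m-n+1}{2}+i\big)\alpha_1\Big) & n\text{ even}, m\text{ odd}. \end{cases}$$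
   Context: $T$ is the adjoint torus of $\widehat{SL_2}$, $H^\bullet_T(\mathrm{pt})=\mathbb{Z}[\alpha_0,\alpha_1]$ (polynomials in the simple roots), and $\{\hat{\varepsilon}_i\}_{i\ge0}$ is the $T$-equivariant Schubert basis of $H^\bullet_T(\mathcal{X})$ (Kumar's basis), indexed by $w_i$, the alternating word of length $i$ in $s_0,s_1$ ending in $s_0$, where $P$ is the maximal parabolic with Weyl group $\{e,s_1\}$. It satisfies $\hat\varepsilon_0=1$ and the equivariant Chevalley formula $\hat{\varepsilon}_1\cdot\hat{\varepsilon}_m=q_m\hat{\varepsilon}_m+(m+1)\hat{\varepsilon}_{m+1}$ with $q_m=\lceil m/2\rceil^2\alpha_0+(\lfloor m/2\rfloor^2+\lfloor m/2\rfloor)\alpha_1$. An empty product equals $1$. *)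

(* Defs.v *)
From HB Require Import structures.
From mathcomp Require Import all_boot all_order all_algebra.
From mathcomp.multinomials Require Import mpoly.
Set Implicit Arguments. Unset Strict Implicit. Unset Printing Implicit Defensive.
Import GRing.Theory.
Local Open Scope ring_scope.

(* H_T(pt) = Z[alpha0, alpha1] *)
Definition HT := {mpoly int[2]}.
Definition alpha0 : HT := 'X_(inord 0).
Definition alpha1 : HT := 'X_(inord 1).

Definition qcoef (m : nat) : HT :=
  ((uphalf m) ^ 2)%N%:R * alpha0 + ((m./2) ^ 2 + m./2)%N%:R * alpha1.

Definition cmm_formula (n m : nat) : HT :=
  if ~~ odd n && ~~ odd m then
    ('C((m + n) %/ 2, n))%:R *
      \prod_(i < n) ((((m - n) %/ 2) + i)%N%:R * alpha0
                     + (((m - n) %/ 2) + 1 + i)%N%:R * alpha1)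
  else if odd n && odd m then
    ('C((m + n) %/ 2, n))%:R *
      \prod_(i < n) ((((m - n) %/ 2) + 1 + i)%N%:R * alpha0
                     + (((m - n) %/ 2) + i)%N%:R * alpha1)
  else if odd n && ~~ odd m then
    ('C((m + n - 1) %/ 2, n))%:R *
      \prod_(i < n) ((((m - n + 1) %/ 2) + i)%N%:R * alpha0
                     + (((m - n + 1) %/ 2) + 1 + i)%N%:R * alpha1)
  else
    ('C((m + n - 1) %/ 2, n))%:R *
      \prod_(i < n) ((((m - n + 1) %/ 2) + 1 + i)%N%:R * alpha0
                     + (((m - n + 1) %/ 2) + i)%N%:R * alpha1).

(* Abstract description of H_T(X) with its Schubert basis eps:
   a commutative Z[alpha0,alpha1]-algebra A, eps linearly independent,
   eps 0 = 1, equivariant Chevalley formula. *)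
Record SchubertData (A : comAlgType HT) (eps : nat -> A) : Prop := {
  sd_indep : forall (N : nat) (f : nat -> HT),
      \sum_(k < N) f k *: eps k = 0 -> forall k, (k < N)%N -> f k = 0;
  sd_one : eps 0%N = 1;
  sd_chevalley : forall m : nat,
      eps 1%N * eps m = qcoef m *: eps m + (m.+1)%:R *: eps m.+1
}.

Definition structure_constants (A : comAlgType HT) (eps : nat -> A)
  (c : nat -> nat -> nat -> HT) : Prop :=
  forall n m : nat,
    eps n * eps m = \sum_(maxn n m <= k < (n + m).+1) c k n m *: eps k.

(* Main.v *)
Require Import Defs.
From HB Require Import structures.
From mathcomp Require Import all_boot all_order all_algebra ring zify.
From mathcomp.multinomials Require Import mpoly.
Local Open Scope ring_scope.
Import GRing.Theory.

Lemma natmul_cancel (k : nat) (x y : HT) : (0 < k)%N -> k%:R * x = k%:R * y -> x = y.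
Proof.
move=> Hk H.
have H2 : (x - y) *+ k = 0.
  by rewrite mulrnBl -[x *+ k]mulr_natl -[y *+ k]mulr_natl H subrr.
apply/mpolyP => mm; apply/eqP; rewrite -subr_eq0 -mcoeffB.
have : (x - y)@_mm *+ k == 0 by rewrite -mcoeffMn H2 mcoeff0.
rewrite Num.Theory.mulrn_eq0 => /orP [|//]; by case: k Hk {H H2}.
Qed.
Definition Lf (s : nat) : HT := s%:R * alpha0 + s.+1%:R * alpha1.
Definition Lf' (s : nat) : HT := s.+1%:R * alpha0 + s%:R * alpha1.

Lemma halfS2 a : (a.*2.+1)./2 = a. Proof. by rewrite /= uphalf_double. Qed.
Lemma uphalfS2 a : uphalf (a.*2.+1) = a.+1. Proof. by rewrite /= doubleK. Qed.

Lemma F1 a b : (b <= a)%N -> qcoef (a.*2) - qcoef (b.*2) = (a - b)%:R * Lf (a + b).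
Proof.
move=> H; have [d ->] : exists d, a = (b + d)%N by exists (a - b)%N; lia.
have -> : (b + d - b = d)%N by lia.
rewrite /qcoef /Lf !uphalf_double !doubleK.
rewrite ?natrD ?natrX ?natrM ?natrD; ring.
Qed.
Lemma F2 a b : (b < a)%N -> qcoef (a.*2) - qcoef (b.*2.+1) = (a + b + 1)%:R * Lf (a - b - 1).
Proof.
move=> H; have [d ->] : exists d, a = (b + d).+1%N by exists (a - b - 1)%N; lia.
have -> : ((b + d).+1 - b - 1 = d)%N by lia.
rewrite /qcoef /Lf uphalf_double doubleK uphalfS2 halfS2.
rewrite ?natrD ?natrX ?natrM ?natrD; ring.
Qed.
Lemma F3 a b : (b <= a)%N -> qcoef (a.*2.+1) - qcoef (b.*2) = (a + b + 1)%:R * Lf' (a - b).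
Proof.
move=> H; have [d ->] : exists d, a = (b + d)%N by exists (a - b)%N; lia.
have -> : (b + d - b = d)%N by lia.
rewrite /qcoef /Lf' uphalf_double doubleK uphalfS2 halfS2.
rewrite ?natrD ?natrX ?natrM ?natrD; ring.
Qed.
Lemma F4 a b : (b <= a)%N -> qcoef (a.*2.+1) - qcoef (b.*2.+1) = (a - b)%:R * Lf' (a + b + 1).
Proof.
move=> H; have [d ->] : exists d, a = (b + d)%N by exists (a - b)%N; lia.
have -> : (b + d - b = d)%N by lia.
rewrite /qcoef /Lf' !uphalfS2 !halfS2.
rewrite ?natrD ?natrX ?natrM ?natrD; ring.
Qed.

Definition Dn (n m : nat) : HT := \prod_(j < n) (qcoef m - qcoef j).
Lemma DnS n m : Dn n.+1 m = Dn n m * (qcoef m - qcoef n).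
Proof. by rewrite /Dn big_ord_recr. Qed.
Lemma Dn0 m : Dn 0 m = 1. Proof. by rewrite /Dn big_ord0. Qed.

Lemma Dod_of_ev a c : (c < a)%N ->
  Dn (c.*2) (a.*2) = ((a+c)^_(c.*2))%:R * \prod_(i < c.*2) Lf (a - c + i) ->
  Dn (c.*2.+1) (a.*2) = ((a+c)^_(c.*2.+1))%:R * \prod_(i < c.*2.+1) Lf (a - c + i).
Proof.
move=> H E; rewrite DnS E F1; last by lia.
rewrite ffactnSr natrM [in RHS]big_ord_recr /=.
have -> : (a + c - c.*2 = a - c)%N by lia.
have -> : (a - c + c.*2 = a + c)%N by lia.
ring.
Qed.

Lemma Dev a c : (c <= a)%N ->
  Dn (c.*2) (a.*2) = ((a+c)^_(c.*2))%:R * \prod_(i < c.*2) Lf (a - c + i).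
Proof.
elim: c => [|c IH] H; first by rewrite Dn0 ffactn0 big_ord0 mulr1.
have Ho := @Dod_of_ev a c (ltac:(lia) : (c < a)%N) (IH ltac:(lia)).
rewrite doubleS DnS Ho F2; last by lia.
rewrite [(a + c.+1)%N]addnS ffactSS natrM [in RHS]big_ord_recl /=.
have -> : (a - c.+1 + 0 = a - c - 1)%N by lia.
rewrite [in RHS](eq_bigr (fun i : 'I_(c.*2.+1) => Lf (a - c + i))); first by ring.
by move=> i _; congr Lf; rewrite /bump ?leq0n ?add1n /=; lia.
Qed.

Lemma Dod a c : (c < a)%N ->
  Dn (c.*2.+1) (a.*2) = ((a+c)^_(c.*2.+1))%:R * \prod_(i < c.*2.+1) Lf (a - c + i).
Proof. move=> H; apply: Dod_of_ev => //; apply: Dev; lia. Qed.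

Lemma Dod_of_ev' a c : (c <= a)%N ->
  Dn (c.*2) (a.*2.+1) = ((a+c)^_(c.*2))%:R * \prod_(i < c.*2) Lf' (a - c + 1 + i) ->
  Dn (c.*2.+1) (a.*2.+1) = ((a+c).+1^_(c.*2.+1))%:R * \prod_(i < c.*2.+1) Lf' (a - c + i).
Proof.
move=> H E; rewrite DnS E F3 //.
rewrite ffactSS natrM [in RHS]big_ord_recl /= addn0.
rewrite [in RHS](eq_bigr (fun i : 'I_(c.*2) => Lf' (a - c + 1 + i))); first by ring.
by move=> i _; congr Lf'; rewrite /bump ?leq0n ?add1n /=; lia.
Qed.

Lemma Dev' a c : (c <= a)%N ->
  Dn (c.*2) (a.*2.+1) = ((a+c)^_(c.*2))%:R * \prod_(i < c.*2) Lf' (a - c + 1 + i).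
Proof.
elim: c => [|c IH] H; first by rewrite Dn0 ffactn0 big_ord0 mulr1.
have Ho := @Dod_of_ev' a c (ltac:(lia) : (c <= a)%N) (IH ltac:(lia)).
rewrite doubleS DnS Ho F4; last by lia.
rewrite [(a + c.+1)%N]addnS [in RHS]ffactnSr natrM [in RHS]big_ord_recr /=.
have -> : ((a + c).+1 - c.*2.+1 = a - c)%N by lia.
have -> : (a - c.+1 + 1 + c.*2.+1 = a + c + 1)%N by lia.
rewrite [in RHS](eq_bigr (fun i : 'I_(c.*2.+1) => Lf' (a - c + i))); first by ring.
by move=> i _; congr Lf'; lia.
Qed.

Lemma Dod' a c : (c <= a)%N ->
  Dn (c.*2.+1) (a.*2.+1) = ((a+c).+1^_(c.*2.+1))%:R * \prod_(i < c.*2.+1) Lf' (a - c + i).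
Proof. move=> H; apply: Dod_of_ev' => //; exact: Dev'. Qed.

Lemma coef_eq (A : comAlgType HT) (eps : nat -> A) (Hsd : SchubertData eps) N (f g : nat -> HT) :
  \sum_(k < N) f k *: eps k = \sum_(k < N) g k *: eps k -> forall k, (k < N)%N -> f k = g k.
Proof.
move=> H k Hk; apply/eqP; rewrite -subr_eq0; apply/eqP.
apply: (sd_indep Hsd (f := fun k => f k - g k)) Hk.
rewrite (eq_bigr (fun k : 'I_N => f k *: eps k - g k *: eps k)).
  by rewrite sumrB H subrr.
by move=> i _; rewrite scalerBl.
Qed.

Lemma coef_eq2 (A : comAlgType HT) (eps : nat -> A) (Hsd : SchubertData eps) N (f1 f2 g1 g2 : nat -> HT) :
  \sum_(k < N) f1 k *: eps k + \sum_(k < N) f2 k *: eps k =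
  \sum_(k < N) g1 k *: eps k + \sum_(k < N) g2 k *: eps k ->
  forall k, (k < N)%N -> f1 k + f2 k = g1 k + g2 k.
Proof.
move=> H; apply: (@coef_eq _ eps Hsd N (fun k => f1 k + f2 k) (fun k => g1 k + g2 k)).
rewrite (eq_bigr (fun k : 'I_N => f1 k *: eps k + f2 k *: eps k)); last by move=> i _; rewrite scalerDl.
rewrite [RHS](eq_bigr (fun k : 'I_N => g1 k *: eps k + g2 k *: eps k)); last by move=> i _; rewrite scalerDl.
by rewrite !big_split.
Qed.

Lemma widen (A : comAlgType HT) (eps : nat -> A) (h g : nat -> HT) lo hi N :
  (hi <= N)%N -> (forall k, g k = if (lo <= k < hi)%N then h k else 0) ->
  \sum_(lo <= k < hi) h k *: eps k = \sum_(k < N) g k *: eps k.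
Proof.
move=> HN Hg.
rewrite (eq_bigr (fun k : 'I_N => if (lo <= k < hi)%N then h k *: eps k else 0)); last first.
  by move=> k _; rewrite Hg; case: ifP; rewrite ?scale0r.
rewrite -big_mkcond /= -(big_mkord (fun k => (lo <= k < hi)%N) (fun k => h k *: eps k)).
rewrite (big_nat_widenl lo 0 hi xpredT) // (big_nat_widen 0 hi N _ _ HN).
by apply: eq_bigl => i /=.
Qed.

Lemma shift1 (A : comAlgType HT) (eps : nat -> A) (h : nat -> HT) lo hi :
  \sum_(lo <= k < hi) h k *: eps k.+1 = \sum_(lo.+1 <= k < hi.+1) h k.-1 *: eps k.
Proof. by rewrite big_add1. Qed.

Lemma recur (A : comAlgType HT) (eps : nat -> A) (c : nat -> nat -> nat -> HT)
  (Hsd : SchubertData eps) (Hc : structure_constants eps c) n m : (n < m)%N ->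
  n.+1%:R * c m n.+1 m = (qcoef m - qcoef n) * c m n m.
Proof.
move=> Hnm.
have E1 : eps 1%N * (eps n * eps m) =
   \sum_(m <= k < (n + m).+1) (c k n m * qcoef k) *: eps k
 + \sum_(m <= k < (n + m).+1) (c k n m * k.+1%:R) *: eps k.+1.
  rewrite (Hc n m) (maxn_idPr (ltnW Hnm)) mulr_sumr -big_split /=; apply: eq_bigr => k _.
  by rewrite -scalerAr (sd_chevalley Hsd) scalerDr !scalerA.
have E2 : eps 1%N * (eps n * eps m) =
   \sum_(m <= k < (n + m).+1) (qcoef n * c k n m) *: eps k
 + \sum_(m <= k < (n.+1 + m).+1) (n.+1%:R * c k n.+1 m) *: eps k.
  rewrite mulrA (sd_chevalley Hsd) mulrDl -!scalerAl (Hc n m) (Hc n.+1 m).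
  rewrite (maxn_idPr (ltnW Hnm)) (maxn_idPr Hnm) !scaler_sumr.
  by congr (_ + _); apply: eq_bigr => k _; rewrite scalerA.
move: E2; rewrite E1 shift1.
pose N := (n + m).+2.
pose g1 k := if (m <= k < (n + m).+1)%N then c k n m * qcoef k else 0.
pose g2 k := if (m.+1 <= k < (n + m).+2)%N then c k.-1 n m * k.-1.+1%:R else 0.
pose g3 k := if (m <= k < (n + m).+1)%N then qcoef n * c k n m else 0.
pose g4 k := if (m <= k < (n.+1 + m).+1)%N then n.+1%:R * c k n.+1 m else 0.
rewrite (@widen _ eps _ g1 _ _ N) // (@widen _ eps _ g2 _ _ N) // (@widen _ eps _ g3 _ _ N) //.
rewrite (@widen _ eps _ g4 _ _ N); [|by rewrite /N; lia|by []].
move/(@coef_eq2 _ _ Hsd)/(_ m ltac:(rewrite /N; lia)).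
rewrite /g1 /g2 /g3 /g4.
rewrite (_ : (m <= m < (n + m).+1)%N = true); last by lia.
rewrite (_ : (m.+1 <= m < (n + m).+2)%N = false); last by lia.
rewrite (_ : (m <= m < (n.+1 + m).+1)%N = true); last by lia.
rewrite addr0 => H.
have -> : (qcoef m - qcoef n) * c m n m = c m n m * qcoef m - qcoef n * c m n m by ring.
rewrite H; ring.
Qed.

Lemma Dfact (A : comAlgType HT) (eps : nat -> A) (c : nat -> nat -> nat -> HT)
  (Hsd : SchubertData eps) (Hc : structure_constants eps c) n m : (n <= m)%N ->
  n`!%:R * c m n m = Dn n m.
Proof.
elim: n => [|n IH] H.
  rewrite Dn0 mul1r.
  have E : \sum_(m <= k < m.+1) 1 *: eps k = \sum_(m <= k < m.+1) c k 0%N m *: eps k.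
    by rewrite big_nat1 scale1r -[eps m]mul1r -(sd_one Hsd) (Hc 0%N m) max0n add0n.
  move: E; pose g1 k := if (m <= k < m.+1)%N then (1 : HT) else 0.
  pose g2 k := if (m <= k < m.+1)%N then c k 0%N m else 0.
  rewrite (@widen _ eps (fun k => c k 0%N m) g2 m m.+1 m.+1) // (@widen _ eps (fun _ => 1) g1 m m.+1 m.+1) //.
  move/(@coef_eq _ _ Hsd)/(_ m (ltnSn m)); rewrite /g1 /g2.
  by rewrite (_ : (m <= m < m.+1)%N = true) //; lia.
have IH' := IH (ltnW H).
rewrite factS natrM [_.+1%:R * _]mulrC -mulrA (@recur _ _ _ Hsd Hc n m H).
rewrite DnS -IH'; ring.
Qed.

Theorem mainTheorem7 (A : comAlgType HT) (eps : nat -> A)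
  (c : nat -> nat -> nat -> HT)
  (Hsd : SchubertData eps) (Hc : structure_constants eps c)
  (n m : nat) (Hnm : (n <= m)%N) :
  c m n m = cmm_formula n m.
Proof.
apply: (@natmul_cancel n`!); first exact: fact_gt0.
rewrite (@Dfact _ _ _ Hsd Hc n m Hnm).
have Hn := odd_double_half n; have Hm := odd_double_half m.
move: Hnm; rewrite -Hn -Hm.
set cc := n./2; set a := m./2.
case: (odd n); case: (odd m); rewrite /= ?add0n ?add1n => Hle.
- rewrite Dod'; last by lia.
  rewrite /cmm_formula /= !odd_double /=.
  have -> : ((a.*2.+1 + cc.*2.+1) %/ 2 = (a + cc).+1)%N by lia.
  have -> : ((a.*2.+1 - cc.*2.+1) %/ 2 = a - cc)%N by lia.
  rewrite [RHS]mulrA -natrM mulnC bin_ffact; congr (_ * _).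
  apply: eq_bigr => i _; rewrite /Lf'; congr (_ * _ + _ * _); congr (_%:R); lia.
- rewrite Dod; last by lia.
  rewrite /cmm_formula /= !odd_double /=.
  have -> : ((a.*2 + cc.*2.+1 - 1) %/ 2 = a + cc)%N by lia.
  have -> : ((a.*2 - cc.*2.+1 + 1) %/ 2 = a - cc)%N by lia.
  rewrite [RHS]mulrA -natrM mulnC bin_ffact; congr (_ * _).
  apply: eq_bigr => i _; rewrite /Lf; congr (_ * _ + _ * _); congr (_%:R); lia.
- rewrite Dev'; last by lia.
  rewrite /cmm_formula /= !odd_double /=.
  have -> : ((a.*2.+1 + cc.*2 - 1) %/ 2 = a + cc)%N by lia.
  have -> : ((a.*2.+1 - cc.*2 + 1) %/ 2 = a - cc + 1)%N by lia.
  rewrite [RHS]mulrA -natrM mulnC bin_ffact; congr (_ * _).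
  apply: eq_bigr => i _; rewrite /Lf'; congr (_ * _ + _ * _); congr (_%:R); lia.
- rewrite Dev; last by lia.
  rewrite /cmm_formula /= !odd_double /=.
  have -> : ((a.*2 + cc.*2) %/ 2 = a + cc)%N by lia.
  have -> : ((a.*2 - cc.*2) %/ 2 = a - cc)%N by lia.
  rewrite [RHS]mulrA -natrM mulnC bin_ffact; congr (_ * _).
  apply: eq_bigr => i _; rewrite /Lf; congr (_ * _ + _ * _); congr (_%:R); lia.
Qed.
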